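(* Let $N\ge3$ be odd, $K=\tilde F(N)$, $L=N(N+1)$, $n=N$, and let $C^0,\dots,C^{K-1}$ be the sequences $c^m_i=\omega_{N+1}^{\pi_m(\langle i\rangle_N)\cdot i}$ ($0\le i<L$) built from a $K\times N$ circular Florentine rectangle with rows $\pi_0,\dots,\pi_{K-1}$. Let $\theta_c$ and $\theta_{\max}$ be as follows: $\theta_c=\max\{|\theta_{C^m,C^{m'}}(\tau)|:m\neq m',\ 0\le\tau<L\}$, $\theta_a=\max\{|\theta_{C^m}(\tau)|:0\le m<K,\ 0<\tau<L\}$, $\theta_{\max}=\max\{\theta_a,\theta_c\}$. Then $\theta_c=\frac{L}{\sqrt{L-n}}$ (i.e., equality holds in the bound $\theta_c\ge L/\sqrt{L-n}$). Moreover, setting $$\theta_{opti}=L\sqrt{\frac{(K-1)L+n}{(L-n)(KL-1)}},$$ if $N\to\infty$ through odd integers with $\tilde F(N)\to\infty$, then $\theta_{\max}/\theta_{opti}\to 1$.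
   Context: $\omega_n=e^{2\pi\sqrt{-1}/n}$; $\langle i\rangle_N$ is $i$ mod $N$. An $M\times N$ circular Florentine rectangle (CFR) over $\mathbb{Z}_N$ is an $M\times N$ array whose rows $\pi_i:\mathbb{Z}_N\to\mathbb{Z}_N$ are permutations such that for every $m\in\mathbb{Z}_N\setminus\{0\}$ and all $i,j,x,y$: $(\pi_i(x),\pi_i(x+m))=(\pi_j(y),\pi_j(y+m))$ (indices mod $N$) iff $i=j$ and $x=y$. $\tilde F(N)$ is the largest $M$ for which an $M\times N$ CFR exists. Periodic correlation: $\theta_{C,D}(\tau)=\sum_{t=0}^{L-1}c_td^*_{\langle t+\tau\rangle_L}$, $\theta_C=\theta_{C,C}$. These sequences have frequency-domain duals vanishing exactly on $\{1+a(N+1):a\in\mathbb{Z}_N\}$ (a set of $n=N$ carriers). *)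

(* Defs.v *)
From HB Require Import structures.
From mathcomp Require Import all_boot all_order all_algebra.
From mathcomp Require Import all_classical all_reals all_analysis.
From mathcomp Require Import complex.
From mathcomp Require Import fingroup perm.
Set Implicit Arguments. Unset Strict Implicit. Unset Printing Implicit Defensive.
Import Order.TTheory GRing.Theory Num.Theory.
Local Open Scope ring_scope.

Definition pnat (N : nat) (p : {perm 'I_N}) (k : nat) : nat :=
  if insub k is Some o then val (p o) else 0%N.

Definition is_CFR (M N : nat) (pi : 'I_M -> {perm 'I_N}) : Prop :=
  forall m : nat, (0 < m < N)%N ->
  forall (i j : 'I_M) (x y : nat), (x < N)%N -> (y < N)%N ->
    ((pnat (pi i) x, pnat (pi i) ((x + m) %% N)) =
     (pnat (pi j) y, pnat (pi j) ((y + m) %% N)))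
    <-> (i = j /\ x = y).

Definition is_Ftilde (K N : nat) : Prop :=
  (exists pi : 'I_K -> {perm 'I_N}, is_CFR pi) /\
  (forall (M : nat) (pi : 'I_M -> {perm 'I_N}), is_CFR pi -> (M <= K)%N).

Local Open Scope complex_scope.

Definition omega (R : realType) (n : nat) : R[i] :=
  (cos (2 * pi / n%:R)) +i* (sin (2 * pi / n%:R)).

Definition cseq (R : realType) (K N : nat) (pi : 'I_K -> {perm 'I_N})
  (m : 'I_K) (t : nat) : R[i] :=
  omega R N.+1 ^+ (pnat (pi m) (t %% N) * t).

Definition pcorr (R : realType) (L : nat) (c d : nat -> R[i]) (tau : nat) : R[i] :=
  \sum_(t < L) c t * (d ((t + tau) %% L)%N)^*.

Definition theta_c (R : realType) (K N : nat) (pi : 'I_K -> {perm 'I_N}) : R :=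
  let L := (N * N.+1)%N in
  \big[Num.max/0]_(m < K) \big[Num.max/0]_(m' < K | m != m')
    \big[Num.max/0]_(tau < L) ComplexField.Normc.normc (pcorr L (cseq R pi m) (cseq R pi m') tau).

Definition theta_a (R : realType) (K N : nat) (pi : 'I_K -> {perm 'I_N}) : R :=
  let L := (N * N.+1)%N in
  \big[Num.max/0]_(m < K)
    \big[Num.max/0]_(tau < L | (0 < tau)%N)
       ComplexField.Normc.normc (pcorr L (cseq R pi m) (cseq R pi m) tau).

Definition theta_max (R : realType) (K N : nat) (pi : 'I_K -> {perm 'I_N}) : R :=
  Num.max (theta_a R pi) (theta_c R pi).

Definition theta_opti (R : realType) (K N : nat) : R :=
  let L : R := (N * N.+1)%N%:R in
  let n : R := N%:R in
  L * Num.sqrt (((K%:R - 1) * L + n) / ((L - n) * (K%:R * L - 1))).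

Definition nat_to_infty (u : nat -> nat) : Prop :=
  forall B : nat, exists k0 : nat, forall k : nat, (k0 <= k)%N -> (B <= u k)%N.

(* Main.v *)
Require Import Defs.
From HB Require Import structures.
From mathcomp Require Import all_boot all_order all_algebra.
From mathcomp Require Import all_classical all_reals all_analysis.
From mathcomp Require Import complex.
From mathcomp Require Import fingroup perm.
From mathcomp Require Import ring lra zify.
Import Order.TTheory GRing.Theory Num.Theory.
Import numFieldNormedType.Exports.
Local Open Scope classical_set_scope.
Local Open Scope ring_scope.
Local Open Scope complex_scope.

Section Om.
Variable R : realType.

Lemma omega_exp (n k : nat) :
  omega R n ^+ k = cos (k%:R * (2 * pi / n%:R)) +i* sin (k%:R * (2 * pi / n%:R)).
Proof.
elim: k => [|k IH]; first by rewrite expr0 mul0r cos0 sin0.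
rewrite exprS IH /omega.
set t := 2 * pi / n%:R.
rewrite -addn1 natrD mulrDl mul1r addrC cosD sinD.
simpc. congr (_ +i* _); ring.
Qed.
Lemma omega_n (n : nat) : (0 < n)%N -> omega R n ^+ n = 1.
Proof.
move=> n0; rewrite omega_exp mulrC divfK ?pnatr_eq0 -?lt0n //.
rewrite -[2]/(2%:R) mulr_natl cos2pi sin2pi //.
Qed.

Lemma cos_neq1 (x : R) : 0 < x < pi *+ 2 -> cos x != 1.
Proof.
move=> /andP[x0 x2].
have cos0' : cos (0:R) = 1 by rewrite cos0.
have pi0 := pi_gt0 R.
case: (lerP x pi) => hx.
  apply/eqP => h.
  have : cos x < cos 0.
    rewrite ltr_cos // !in_itv /= ?lexx ?(ltW x0) ?hx ?(ltW pi0) //.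
  by rewrite h cos0 ltxx.
have -> : cos x = cos (pi *+ 2 - x) by rewrite cosB cos2pi sin2pi mul1r mul0r addr0.
apply/eqP => h.
have : cos (pi *+ 2 - x) < cos 0.
  rewrite ltr_cos //; first lra.
    by rewrite in_itv /= lexx (ltW pi0).
  rewrite in_itv /=; apply/andP; split; lra.
by rewrite h cos0 ltxx.
Qed.

Lemma omega_neq1 (n k : nat) : (0 < k < n)%N -> omega R n ^+ k != 1.
Proof.
move=> /andP[k0 kn]; rewrite omega_exp; apply/negP => /eqP [] h _.
move: h; apply/eqP/cos_neq1.
have n0 : (0 < n%:R :> R) by rewrite ltr0n; apply: leq_ltn_trans kn.
have k0' : (0 < k%:R :> R) by rewrite ltr0n.
have kn' : (k%:R < n%:R :> R) by rewrite ltr_nat.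
have pi0 := pi_gt0 R.
rewrite mulrA mulr_gt0 ?divr_gt0 ?mulr_gt0 //=; last by rewrite invr_gt0.
rewrite mulrA ltr_pdivrMr // -[2]/(2%:R) mulr_natr mulrnAl.
rewrite !mulr2n; nra.
Qed.

Lemma normc_omega (n k : nat) : ComplexField.Normc.normc (omega R n ^+ k) = 1.
Proof. by rewrite omega_exp /ComplexField.Normc.normc cos2Dsin2 sqrtr1. Qed.

Lemma omega_mod (n k : nat) : (0 < n)%N -> omega R n ^+ k = omega R n ^+ (k %% n).
Proof.
move=> n0; rewrite {1}(divn_eq k n) exprD mulnC exprM omega_n // expr1n mul1r //.
Qed.

Lemma omega_eqmod (n a b : nat) : (0 < n)%N -> a = b %[mod n] ->
  omega R n ^+ a = omega R n ^+ b.
Proof. by move=> n0 h; rewrite (omega_mod n a n0) h -omega_mod. Qed.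

Lemma omega_conj (n k : nat) : (0 < n)%N ->
  conjc (omega R n ^+ k) = omega R n ^+ (n.-1 * k).
Proof.
move=> n0.
have h1 : (omega R n)^* * omega R n = 1.
  rewrite /omega; simpc. rewrite -!expr2 cos2Dsin2.
  by congr (_ +i* _); ring.
have h2 : omega R n ^+ n.-1 * omega R n = 1.
  by rewrite -exprSr prednK // omega_n.
have wn0 : omega R n != 0.
  apply/eqP => h; move: h2; rewrite h mulr0 => /eqP; rewrite eq_sym oner_eq0 //.
have hc : (omega R n)^* = omega R n ^+ n.-1.
  by apply: (mulIf wn0); rewrite h1 h2.
have -> : conjc (omega R n ^+ k) = (conjc (omega R n)) ^+ k by rewrite rmorphXn.
by rewrite hc -exprM.
Qed.

Lemma geom_sum0 (F : fieldType) (x : F) (n : nat) : x ^+ n = 1 -> x != 1 ->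
  \sum_(i < n) x ^+ i = 0.
Proof.
move=> xn x1; have := subrX1 x n; rewrite xn subrr => /esym /eqP.
by rewrite mulf_eq0 subr_eq0 (negbTE x1) /= => /eqP.
Qed.
End Om.
Lemma NconjE (R : realType) (x : R[i]) : Num.conj x = conjc x.
Proof. by []. Qed.

Lemma sum_crt (V : nmodType) (N e : nat) (G : nat -> nat -> V) :
  (0 < N)%N -> (0 < e)%N -> coprime N e ->
  \sum_(t < N * e) G (t %% N)%N (t %% e)%N = \sum_(a < N) \sum_(b < e) G a b.
Proof.
move=> N0 e0 co.
have Ne0 : (0 < N * e)%N by rewrite muln_gt0 N0 e0.
rewrite pair_bigA /=.
pose h (t : 'I_(N * e)) : 'I_N * 'I_e := (Ordinal (ltn_pmod t N0), Ordinal (ltn_pmod t e0)).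
pose g (p : 'I_N * 'I_e) : 'I_(N * e) := Ordinal (ltn_pmod (chinese N e p.1 p.2) Ne0).
have hg : cancel h g.
  move=> t; apply: val_inj => /=.
  by rewrite -chinese_mod // modn_small.
have gh : cancel g h.
  move=> [a b]; congr (_, _); apply: val_inj => /=.
    by rewrite modn_dvdm ?dvdn_mulr // chinese_modl // modn_small.
  by rewrite modn_dvdm ?dvdn_mull // chinese_modr // modn_small.
rewrite (reindex h) /=; last by exists g => x _.
by [].
Qed.

Lemma pnat_lt N (p : {perm 'I_N}) k : (0 < N)%N -> (Defs.pnat p k < N)%N.
Proof.
move=> N0; rewrite /Defs.pnat.
match goal with |- context [insub ?x] => destruct (insub x) as [u|] end => //.
exact: ltn_ord.
Qed.

Lemma pnat_ord N (p : {perm 'I_N}) (a : 'I_N) : Defs.pnat p a = p a.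
Proof.
by rewrite /Defs.pnat valK.
Qed.

Lemma mod_ne0 N P Q : (P < N)%N -> (Q < N)%N -> P != Q -> ((P + N * Q) %% N.+1 != 0)%N.
Proof.
move=> hP hQ hPQ; apply/negP => /eqP h.
have h1 : ((P + N * Q + Q) %% N.+1 = Q %% N.+1)%N by rewrite -modnDml h.
have h2 : (P + N * Q + Q = Q * N.+1 + P)%N by rewrite mulnS; ring.
move: h1; rewrite h2 modnMDl !modn_small //; try lia; by move/eqP; rewrite (negbTE hPQ).
Qed.

Section Corr.
Variable R : realType.
Variables (K N : nat) (pi : 'I_K -> {perm 'I_N}) (m m' : 'I_K) (tau : nat).
Hypothesis N0 : (0 < N)%N.
Local Notation w := (omega R N.+1).

Lemma corr_formula :
  pcorr (N * N.+1) (cseq R pi m) (cseq R pi m') tau =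
  N.+1%:R * \sum_(a < N | Defs.pnat (pi m) a == Defs.pnat (pi m') ((a + tau) %% N))
    w ^+ (N * (Defs.pnat (pi m') ((a + tau) %% N) * tau)).
Proof.
pose P a := Defs.pnat (pi m) a.
pose Q a := Defs.pnat (pi m') ((a + tau) %% N).
pose G a b := (w ^+ b) ^+ (P a) * ((w ^+ (b + tau)) ^+ (Q a)) ^+ N.
have e0 : (0 < N.+1)%N by [].
have step1 : pcorr (N * N.+1) (cseq R pi m) (cseq R pi m') tau =
    \sum_(t < N * N.+1) G (t %% N)%N (t %% N.+1)%N.
  rewrite /pcorr; apply: eq_bigr => t _.
  rewrite /cseq NconjE omega_conj //= /G /P /Q.
  have hm : ((t + tau) %% (N * N.+1) %% N = (t %% N + tau) %% N)%N.
    by rewrite modn_dvdm ?dvdn_mulr // modnDml.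
  rewrite hm; congr (_ * _).
    by rewrite mulnC exprM -omega_mod.
  rewrite mulnC exprM mulnC exprM; congr (_ ^+ _ ^+ _).
  apply: omega_eqmod => //.
  by rewrite modn_dvdm ?dvdn_mull // modnDml.
rewrite step1 (@sum_crt _ N N.+1 G) // ?coprimenS //.
rewrite big_distrr /= [RHS]big_mkcond /=; apply: eq_bigr => a _.
have hG : forall b, G a b = w ^+ (N * (Q a * tau)) * (w ^+ (P a + N * Q a)) ^+ b.
  move=> b; rewrite /G -!exprM -!exprD; congr (w ^+ _); ring.
under eq_bigr => b _ do rewrite hG.
rewrite -big_distrr /=.
rewrite -/(P a) -/(Q a).
case: eqP => hPQ.
  rewrite hPQ.
  have -> : w ^+ (Q a + N * Q a) = 1 by rewrite -mulSn exprM omega_n // expr1n.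
  under eq_bigr do rewrite expr1n.
  by rewrite sumr_const card_ord mulrC.
rewrite geom_sum0 ?mulr0 //.
  by rewrite -exprM mulnC exprM omega_n // expr1n.
rewrite omega_mod //; apply: omega_neq1.
rewrite ltn_pmod // andbT lt0n.
apply: mod_ne0; rewrite ?pnat_lt //.
by apply/eqP.
Qed.
End Corr.

Section Max.
Variable R : realType.

Lemma bigmax_le (I : finType) (P : pred I) (F : I -> R) c :
  0 <= c -> (forall i, P i -> F i <= c) -> \big[Num.max/0]_(i | P i) F i <= c.
Proof.
move=> c0 hF; apply: (big_ind (fun x => x <= c)) => //.
by move=> x y hx hy; rewrite ge_max hx hy.
Qed.

Lemma le_bigmax (I : finType) (P : pred I) (F : I -> R) i0 :
  P i0 -> F i0 <= \big[Num.max/0]_(i | P i) F i.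
Proof.
move=> Pi0.
have : forall r, i0 \in r -> F i0 <= \big[Num.max/0]_(i <- r | P i) F i.
  elim => // x r IH; rewrite in_cons big_cons => /orP [/eqP <-|h].
    by rewrite Pi0 le_max lexx.
  case: (P x); last exact: IH.
  by rewrite le_max IH ?orbT.
by apply; rewrite mem_index_enum.
Qed.

Lemma normc_nat (n : nat) : ComplexField.Normc.normc (n%:R : R[i]) = n%:R.
Proof. by rewrite normcMn ComplexField.Normc.normc1. Qed.

Lemma normc_scale (n : nat) (z : R[i]) : ComplexField.Normc.normc z = 1 ->
  ComplexField.Normc.normc (n%:R * z) = n%:R.
Proof. by move=> h; rewrite ComplexField.Normc.normcM h mulr1 normc_nat. Qed.
End Max.

Lemma pnat_ordk N (p : {perm 'I_N}) k (hk : (k < N)%N) :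
  Defs.pnat p k = p (Ordinal hk).
Proof. exact: (pnat_ord _ p (Ordinal hk)). Qed.

Section Theta.
Variable R : realType.
Variables (K N : nat) (pi : 'I_K -> {perm 'I_N}).
Hypothesis N0 : (0 < N)%N.
Hypothesis hCFR : is_CFR pi.
Local Notation normc := ComplexField.Normc.normc.

Lemma cross_uniq (m m' : 'I_K) tau (a1 a2 : 'I_N) : m != m' ->
  Defs.pnat (pi m) a1 == Defs.pnat (pi m') ((a1 + tau) %% N) ->
  Defs.pnat (pi m) a2 == Defs.pnat (pi m') ((a2 + tau) %% N) -> a1 = a2.
Proof.
move=> hmm /eqP h1 /eqP h2; apply/eqP/negP => /negP hne.
have ha1 := ltn_ord a1; have ha2 := ltn_ord a2.
have hne' : (val a1 != val a2) by [].
pose d := ((a2 + N - a1) %% N)%N.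
have hd : (0 < d < N)%N.
  rewrite ltn_pmod // andbT lt0n /d.
  case: (ltnP a1 a2) => hh.
    have -> : (a2 + N - a1 = (a2 - a1) + N)%N by lia.
    rewrite modnDr modn_small; lia.
  have hh' : (a2 < a1)%N by rewrite ltn_neqAle eq_sym hne' hh.
  rewrite modn_small; lia.
have e1 : ((a1 + d) %% N = a2)%N.
  rewrite /d modnDmr.
  have -> : (a1 + (a2 + N - a1) = a2 + N)%N by lia.
  by rewrite modnDr modn_small.
have e2 : (((a1 + tau) %% N + d) %% N = (a2 + tau) %% N)%N.
  rewrite modnDml /d modnDmr.
  have -> : (a1 + tau + (a2 + N - a1) = (a2 + tau) + N)%N by lia.
  by rewrite modnDr.
have := (@hCFR d hd m m' a1 ((a1 + tau) %% N)%N (ltn_ord a1) (ltn_pmod (a1 + tau) N0)).1.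
rewrite e1 e2 -h1 -h2 => /(_ erefl) [hm _].
by move: hmm; rewrite hm eqxx.
Qed.

Lemma cross_bound (m m' : 'I_K) tau : m != m' ->
  normc (pcorr (N * N.+1) (cseq R pi m) (cseq R pi m') tau) <= N.+1%:R.
Proof.
move=> hmm; rewrite corr_formula //.
case: (pickP (fun a : 'I_N => Defs.pnat (pi m) a == Defs.pnat (pi m') ((a + tau) %% N))) => [a0 Sa0 | none].
  rewrite (big_pred1 a0); last first.
    move=> a; apply/idP/eqP => [Sa|->//]; exact: (@cross_uniq m m' tau a a0 hmm Sa Sa0).
  by rewrite normc_scale ?normc_omega.
by rewrite big_pred0 // mulr0 ComplexField.Normc.normc0 ler0n.
Qed.

Lemma cross_attain (m m' : 'I_K) : m != m' -> exists2 tau, (tau < N * N.+1)%N &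
  normc (pcorr (N * N.+1) (cseq R pi m) (cseq R pi m') tau) = N.+1%:R.
Proof.
move=> hmm.
pose a0 : 'I_N := Ordinal N0.
pose y := ((pi m')^-1)%g (pi m a0).
exists (val y).
  by apply: (leq_trans (ltn_ord y)); rewrite leq_pmulr.
rewrite corr_formula //.
have Sa0 : Defs.pnat (pi m) a0 == Defs.pnat (pi m') ((a0 + y) %% N).
  rewrite add0n modn_small // pnat_ord pnat_ord /y permKV //.
rewrite (big_pred1 a0); last first.
  move=> a; apply/idP/eqP => [Sa|->//]; exact: (@cross_uniq m m' y a a0 hmm Sa Sa0).
by rewrite normc_scale ?normc_omega.
Qed.

Lemma auto_sum (p : {perm 'I_N}) tau : (tau %% N = 0)%N -> ~~ (N.+1 %| tau)%N ->
  \sum_(a < N | Defs.pnat p a == Defs.pnat p ((a + tau) %% N))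
     omega R N.+1 ^+ (N * (Defs.pnat p ((a + tau) %% N) * tau)) =
  - (omega R N.+1 ^+ (N * tau)) ^+ N.
Proof.
move=> hz hnd.
have hmod : forall a : 'I_N, ((a + tau) %% N)%N = a.
  by move=> a; rewrite -modnDmr hz addn0 modn_small.
under eq_bigl => a do rewrite hmod eqxx.
under eq_bigr => a _ do rewrite hmod pnat_ord.
set y := omega R N.+1 ^+ (N * tau).
have -> : \sum_(a < N) omega R N.+1 ^+ (N * (p a * tau)) = \sum_(a < N) y ^+ (p a).
  by apply: eq_bigr => a _; rewrite /y -exprM; congr (_ ^+ _); ring.
rewrite -(@reindex_inj _ _ _ _ p xpredT (fun a : 'I_N => y ^+ a) (@perm_inj _ p)) /=.
have hy : y ^+ N.+1 = 1 by rewrite /y -exprM mulnC exprM omega_n // expr1n.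
have hy1 : y != 1.
  rewrite /y omega_mod //; apply: omega_neq1.
  rewrite ltn_pmod // andbT lt0n; apply/negP => /eqP h.
  by move: hnd; rewrite -(Gauss_dvdr _ (coprimeSn N)) /dvdn h.
have := @geom_sum0 _ y N.+1 hy hy1; rewrite big_ord_recr /= => /eqP; rewrite addr_eq0 => /eqP //.
Qed.


Lemma auto_eq (m : 'I_K) tau : (tau %% N = 0)%N -> ~~ (N.+1 %| tau)%N ->
  normc (pcorr (N * N.+1) (cseq R pi m) (cseq R pi m) tau) = N.+1%:R.
Proof.
move=> hz hnd; rewrite corr_formula // auto_sum // normc_scale //.
by rewrite normcN -exprM normc_omega.
Qed.

Lemma auto_bound (m : 'I_K) tau : (0 < tau < N * N.+1)%N ->
  normc (pcorr (N * N.+1) (cseq R pi m) (cseq R pi m) tau) <= N.+1%:R.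
Proof.
move=> /andP [t0 tL].
have [hz|hnz] := eqVneq (tau %% N)%N 0%N.
  rewrite auto_eq //; apply/negP => hd.
  have : (N * N.+1 %| tau)%N.
    by rewrite Gauss_dvd ?coprimenS // hd andbT /dvdn hz.
  move/(dvdn_leq t0); lia.
rewrite corr_formula //.
rewrite big_pred0 ?mulr0 ?ComplexField.Normc.normc0 ?ler0n // => a.
apply/negP => /eqP h.
have hk := ltn_pmod (a + tau) N0.
move: h; rewrite pnat_ord (pnat_ordk _ _ _ hk) => /val_inj /perm_inj /(congr1 val) /= h.
have : (a + tau == a + 0 %[mod N])%N by rewrite -h addn0 modn_small.
by rewrite eqn_modDl mod0n (negbTE hnz).
Qed.

Lemma auto_attain (m : 'I_K) :
  normc (pcorr (N * N.+1) (cseq R pi m) (cseq R pi m) N) = N.+1%:R.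
Proof.
rewrite auto_eq ?modnn //.
rewrite /dvdn modn_small //.
by rewrite -lt0n.
Qed.
End Theta.

Section Theta2.
Variable R : realType.
Variables (K N : nat) (pi : 'I_K -> {perm 'I_N}).
Hypothesis N0 : (0 < N)%N.
Hypothesis hCFR : is_CFR pi.

Lemma theta_c_le : theta_c R pi <= N.+1%:R.
Proof.
rewrite /theta_c /=.
apply: bigmax_le => // m _; apply: bigmax_le => // m' hmm; apply: bigmax_le => // t _.
exact: cross_bound.
Qed.

Lemma theta_c_eq : (1 < K)%N -> theta_c R pi = N.+1%:R.
Proof.
move=> K1; apply/le_anti; rewrite theta_c_le /=.
have K0 : (0 < K)%N by apply: ltn_trans K1.
pose m0 : 'I_K := Ordinal K0.
pose m1 : 'I_K := Ordinal K1.
have h01 : m0 != m1 by [].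
have [t tL ht] := @cross_attain R K N pi N0 hCFR m0 m1 h01.
rewrite /theta_c /=.
apply: le_trans (le_bigmax _ _ _ _ m0 _) => //=.
apply: le_trans (le_bigmax _ _ _ _ m1 _) => //=.
apply: le_trans (le_bigmax _ _ _ _ (Ordinal tL) _) => //=.
by rewrite ht.
Qed.

Lemma theta_a_eq : (0 < K)%N -> theta_a R pi = N.+1%:R.
Proof.
move=> K0; apply/le_anti; apply/andP; split.
  rewrite /theta_a /=.
  apply: bigmax_le => // m _; apply: bigmax_le => // t ht.
  by apply: auto_bound => //; rewrite ht ltn_ord.
pose m0 : 'I_K := Ordinal K0.
have NL : (N < N * N.+1)%N by rewrite -[X in (X < _)%N]muln1 ltn_pmul2l.
rewrite /theta_a /=.
apply: le_trans (le_bigmax _ _ _ _ m0 _) => //=.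
apply: le_trans (le_bigmax _ _ _ _ (Ordinal NL) _) => //=.
by rewrite auto_attain.
Qed.

Lemma theta_max_eq : (0 < K)%N -> theta_max R pi = N.+1%:R.
Proof.
move=> K0; rewrite /theta_max theta_a_eq //.
by apply/max_idPl; apply: theta_c_le.
Qed.
End Theta2.

Lemma modcancel N a x y : coprime a N -> (x < N)%N -> (y < N)%N ->
  ((a * x) %% N = (a * y) %% N)%N -> x = y.
Proof.
move=> co hx hy.
wlog xy : x y hx hy / (x <= y)%N.
  move=> W h; case: (leqP x y) => hxy; first exact: W.
  by apply/esym/W => //; apply: ltnW.
move=> /esym /eqP; rewrite eqn_mod_dvd ?leq_mul2l ?xy ?orbT // -mulnBr.
rewrite Gauss_dvdr; last by rewrite coprime_sym.
move=> hd; have := dvdn_leq; case: (posnP (y - x)) => h0; first lia.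
move=> /(_ _ _ h0 hd); lia.
Qed.

Arguments modcancel {N a x y}.

Section TwoRows.
Variables (N : nat).
Hypothesis N0 : (0 < N)%N.
Hypothesis oddN : odd N.

Definition mulf (a : nat) (x : 'I_N) : 'I_N := Ordinal (ltn_pmod (a * x) N0).

Lemma mulf_inj a : coprime a N -> injective (mulf a).
Proof.
move=> co x y /(congr1 val) /= h; apply: val_inj.
exact: (modcancel co (ltn_ord x) (ltn_ord y) h).
Qed.

Lemma co2 (i : 'I_2) : coprime i.+1 N.
Proof. by case: i => [[|[|//]]] //= _; rewrite ?coprime1n ?coprime2n. Qed.

Definition pi2 (i : 'I_2) : {perm 'I_N} := perm (@mulf_inj i.+1 (co2 i)).

Lemma pnat_pi2 i k : (k < N)%N -> Defs.pnat (pi2 i) k = ((i.+1 * k) %% N)%N.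
Proof. by move=> hk; rewrite (pnat_ordk _ _ _ hk) permE. Qed.

Lemma pi2_CFR : is_CFR pi2.
Proof.
move=> mm /andP [m0 mN] i j x y hx hy; split; last by case=> -> ->.
rewrite !pnat_pi2 ?ltn_pmod // => - [h1 h2].
rewrite !modnMmr !mulnDr in h2.
have hm' : ((i.+1 * x + i.+1 * mm) %% N = (i.+1 * x + j.+1 * mm) %% N)%N.
  by rewrite h2 -[RHS]modnDml h1 modnDml.
move/eqP: hm'; rewrite eqn_modDl => /eqP hm.
have hne : forall mm', (0 < mm' < N)%N -> ((1 * mm') %% N <> (2 * mm') %% N)%N.
  move=> mm' /andP [h0 h1'] h; move/eqP: h.
  rewrite mul1n mul2n -addnn -{1}[mm']add0n eqn_modDr mod0n modn_small //; lia.
clear h2; case: i h1 hm => [[|[|//]]] hi; case: j => [[|[|//]]] hj h1 hm.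
- split; first exact: val_inj.
  exact: (modcancel (coprime1n N) hx hy h1).
- by have := hne mm; rewrite m0 mN => /(_ isT).
- by have := hne mm; rewrite m0 mN => /(_ isT) /(_ (esym hm)).
- split; first exact: val_inj.
  exact: (modcancel (co2 (Ordinal hi)) hx hy h1).
Qed.
End TwoRows.

Lemma Ftilde_ge2 K N : odd N -> (3 <= N)%N -> is_Ftilde K N -> (1 < K)%N.
Proof.
move=> oN N3 [_ hmax].
have N0 : (0 < N)%N by apply: leq_trans N3.
exact: (hmax 2 (@pi2 N N0 oN) (@pi2_CFR N N0 oN)).

Qed.

Lemma ratio_bound (R : realType) (K N : nat) : (2 <= K)%N -> (1 <= N)%N ->
  1 <= N.+1%:R / theta_opti R K N <= 1 + (K%:R - 1)^-1.
Proof.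
move=> K2 N1.
rewrite /theta_opti.
set n : R := N%:R. set k : R := K%:R.
have hl : ((N * N.+1)%N%:R : R) = n * (n + 1) by rewrite natrM -addn1 natrD.
rewrite hl.
have hn : 1 <= n by rewrite /n ler1n.
have hk : 2 <= k by rewrite /k ler_nat.
have -> : (N.+1%:R : R) = n + 1 by rewrite -addn1 natrD.
set l := n * (n + 1).
set D := (k - 1) * l + n.
set E := k * l - 1.
have hl1 : l = n * n + n by rewrite /l; ring.
have lpos : 2 <= l by rewrite hl1; nra.
have Dpos : 0 < D by rewrite /D; nra.
have Epos : 0 < E by rewrite /E; nra.
have hln : l - n = n ^+ 2 by rewrite hl1; ring.
rewrite hln.
set X := D / (n ^+ 2 * E).
have X0 : 0 < X by rewrite /X divr_gt0 // mulr_gt0 // exprn_gt0 //; lra.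
set s := Num.sqrt X.
have s0 : 0 < s by rewrite /s sqrtr_gt0.
have s2 : s ^+ 2 = X by rewrite /s sqr_sqrtr // ltW.
set u := n * s.
have u0 : 0 < u by rewrite /u mulr_gt0 //; lra.
have hu : u ^+ 2 * E = D.
  rewrite /u exprMn s2 /X; field; apply/andP; split; rewrite ?gt_eqF //; lra.
have -> : (n + 1) / (l * s) = u^-1.
  rewrite /u /l; field; rewrite ?gt_eqF //; try lra.
have DE : D <= E by rewrite /D /E; nra.
have u1 : u <= 1.
  have : u ^+ 2 <= 1.
    by rewrite -(ler_pM2r Epos) hu mul1r.
  nra.
apply/andP; split.
  by rewrite invf_ge1.
have k1 : 0 < k - 1 by lra.
have key : (k - 1) * (1 - u) <= u.
  have h1 : (k - 1) * (1 - u ^+ 2) * E <= u ^+ 2 * E.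
    have -> : (k - 1) * (1 - u ^+ 2) * E = (k - 1) * (E - u ^+ 2 * E) by ring.
    rewrite hu /D /E /l; nra.
  have h2 : (k - 1) * (1 - u ^+ 2) <= u ^+ 2 by rewrite -(ler_pM2r Epos).
  nra.
rewrite -subr_le0.
have -> : u^-1 - (1 + (k - 1)^-1) = ((k - 1) * (1 - u) - u) / (u * (k - 1)).
  field; apply/andP; split; rewrite ?gt_eqF //.
rewrite pmulr_lle0 ?subr_le0 // invr_gt0 mulr_gt0 //.
Qed.

Local Close Scope complex_scope.

Theorem theorem4 (R : realType) :
  (forall (N K : nat) (pi : 'I_K -> {perm 'I_N}),
      odd N -> (3 <= N)%N -> is_Ftilde K N -> is_CFR pi ->
      theta_c R pi =
        (N * N.+1)%N%:R / Num.sqrt ((N * N.+1)%N%:R - N%:R)) /\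
  (forall (Ns Ks : nat -> nat) (pis : forall k, 'I_(Ks k) -> {perm 'I_(Ns k)}),
      (forall k, odd (Ns k) /\ (3 <= Ns k)%N) ->
      (forall k, is_Ftilde (Ks k) (Ns k)) ->
      (forall k, is_CFR (pis k)) ->
      nat_to_infty Ns -> nat_to_infty Ks ->
      (fun k => theta_max R (pis k) / theta_opti R (Ks k) (Ns k)) @ \oo --> (1 : R)).
Proof.
split.
  move=> N K pi oN N3 hF hC.
  have N0 : (0 < N)%N by apply: leq_trans N3.
  rewrite theta_c_eq //; last exact: (Ftilde_ge2 _ _ oN N3 hF).
  have -> : ((N * N.+1)%N%:R - N%:R : R) = N%:R ^+ 2.
    by rewrite natrM -addn1 natrD; ring.
  rewrite sqrtr_sqr ger0_norm // natrM [X in X / _]mulrC mulfK //.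
  by rewrite pnatr_eq0 -lt0n.
move=> Ns Ks pis hN hF hC _ hK.
apply/cvgrPdist_le => eps eps0.
pose B := (Num.Def.trunc (eps^-1)).+2.
have [k0 hk0] := hK B.
exists k0 => // k /= hk.
have [oN N3] := hN k.
have N0 : (0 < Ns k)%N by apply: leq_trans N3.
have K2 := Ftilde_ge2 _ _ oN N3 (hF k).
rewrite theta_max_eq //; last by apply: ltnW.
have /andP [r1 r2] := ratio_bound R _ _ K2 N0.
rewrite ler0_norm ?subr_le0 // opprB.
apply: (@le_trans _ _ (((Ks k)%:R - 1)^-1)); first by rewrite lerBlDl.
have hB : eps^-1 < (B%:R : R) - 1.
  rewrite /B -addn1 natrD addrK; exact: truncnS_gt.
have hKB : (B%:R : R) <= (Ks k)%:R by rewrite ler_nat; exact: hk0.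
have Kp : 0 < (Ks k)%:R - 1 :> R.
  have : (2%:R : R) <= (Ks k)%:R by rewrite ler_nat.
  lra.
rewrite -[X in X <= _]div1r ler_pdivrMr //.
have : eps * eps^-1 = 1 by rewrite mulfV // gt_eqF.
nra.
Qed.
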